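(* Let $\rho$ be a congruence on a commutative semiring $A$. Then $\sqrt{\rho}$ is a congruence on $A$, and $(\sqrt{\rho})_+=\sqrt{\rho}$.
   Context: Semirings are commutative with $0$ and $1\neq0$, $0a=0$. A congruence is an equivalence relation $\rho$ on $A$ with $(a,b),(c,d)\in\rho\Rightarrow(a+c,b+d),(ac,bd)\in\rho$. Twisted product $(a,b)\ast(c,d)=(ac+bd,ad+bc)$, $(a,b)^{\ast1}=(a,b)$, $(a,b)^{\ast n}=(a,b)^{\ast(n-1)}\ast(a,b)$. For a relation $R$, $R_+=\{(a,b)\in A\times A:(a+c,b+c)\in R\ \text{for some}\ c\in A\}$. $\sqrt\rho=\{(a,b)\in A\times A:(a+c,b+c)^{\ast n}\in\rho\ \text{for some}\ c\in A,\ n\ge1\}$. *)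

(* Defs.v *)
(* Commutative semiring with 0, 1 <> 0 and 0a = 0:
   MathComp's comNzSemiRingType. Relations on A are A -> A -> Prop. *)
From mathcomp Require Import all_boot all_algebra.
Set Implicit Arguments. Unset Strict Implicit. Unset Printing Implicit Defensive.
Import GRing.Theory.
Local Open Scope ring_scope.

Definition rel_of (A : Type) := A -> A -> Prop.

Definition is_congruence (A : comNzSemiRingType) (rho : rel_of A) : Prop :=
  (forall a, rho a a) /\
  (forall a b, rho a b -> rho b a) /\
  (forall a b c, rho a b -> rho b c -> rho a c) /\
  (forall a b c d, rho a b -> rho c d -> rho (a + c) (b + d)) /\
  (forall a b c d, rho a b -> rho c d -> rho (a * c) (b * d)).

Definition tw (A : comNzSemiRingType) (p q : A * A) : A * A :=
  (p.1 * q.1 + p.2 * q.2, p.1 * q.2 + p.2 * q.1).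

(* Twisted power p^{*n} for n >= 1: p^{*1} = p, p^{*n} = p^{*(n-1)} * p.
   The value at n = 0 is a junk value (p) never used, since sqrt_rel requires n >= 1. *)
Fixpoint twpow (A : comNzSemiRingType) (p : A * A) (n : nat) : A * A :=
  match n with
  | O => p
  | S O => p
  | S m => tw (twpow p m) p
  end.

Definition rel_plus (A : comNzSemiRingType) (R : rel_of A) : rel_of A :=
  fun a b => exists c, R (a + c) (b + c).

Definition sqrt_rel (A : comNzSemiRingType) (rho : rel_of A) : rel_of A :=
  fun a b => exists c : A, exists n : nat, (1 <= n)%N /\
    let p := twpow (a + c, b + c) n in rho p.1 p.2.

(* Main.v *)
Require Import Defs.
From mathcomp Require Import all_boot all_algebra.
From mathcomp Require Import ring zify.
Import GRing.Theory.
Set Implicit Arguments.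
Local Open Scope ring_scope.

Section Aux.
Variable A : comNzSemiRingType.
Implicit Types p q r : A * A.

Definition pw p (k : nat) : A * A := iter k (fun r => tw r p) (1, 0).
Definition padd p q : A * A := (p.1 + q.1, p.2 + q.2).
Definition swp p : A * A := (p.2, p.1).

Lemma pair_eq p q : p.1 = q.1 -> p.2 = q.2 -> p = q.
Proof. by case: p; case: q => /= ? ? ? ? -> ->. Qed.

Lemma twC p q : tw p q = tw q p.
Proof. apply: pair_eq; rewrite /tw /=; ring. Qed.
Lemma twA p q r : tw p (tw q r) = tw (tw p q) r.
Proof. apply: pair_eq; rewrite /tw /=; ring. Qed.
Lemma tw1 p : tw (1, 0) p = p.
Proof. apply: pair_eq; rewrite /tw /=; ring. Qed.
Lemma twD p q r : tw (padd p q) r = padd (tw p r) (tw q r).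
Proof. apply: pair_eq; rewrite /tw /padd /=; ring. Qed.
Lemma tw_swp p q : tw (swp p) q = swp (tw p q).
Proof. apply: pair_eq; rewrite /tw /swp /=; ring. Qed.

Lemma pwS p k : pw p k.+1 = tw (pw p k) p.
Proof. by []. Qed.

Lemma pwD p a b : pw p (a + b) = tw (pw p a) (pw p b).
Proof.
elim: b => [|b IH]; first by rewrite addn0 /= twC tw1.
by rewrite addnS !pwS IH twA.
Qed.

Lemma pwM p q k : pw (tw p q) k = tw (pw p k) (pw q k).
Proof.
elim: k => [|k IH]; first by rewrite /= tw1.
rewrite !pwS IH.
apply: pair_eq; rewrite /tw /=; ring.
Qed.

Lemma pw_swp p k : pw (swp p) k = if odd k then swp (pw p k) else pw p k.
Proof.
elim: k => [|k IH] //=.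
rewrite IH; case: (odd k) => /=; apply: pair_eq; rewrite /tw /swp /=; ring.
Qed.

Lemma twpow_pw p n : (1 <= n)%N -> twpow p n = pw p n.
Proof.
case: n => // n _; elim: n => [|n IH]; first by rewrite /= tw1.
by rewrite pwS -IH.
Qed.

Variable rho : A -> A -> Prop.
Hypothesis Hc : is_congruence rho.
Definition J r := rho r.1 r.2.

Lemma J_tw r s : J r -> J (tw r s).
Proof.
case: Hc => Hr [Hs [Ht [Ha Hm]]] Hj; rewrite /J /tw /=.
have h1 := Hm _ _ _ _ Hj (Hr s.1).
have h2 := Hm _ _ _ _ Hj (Hr s.2).
have h3 := Ha _ _ _ _ h1 (Hs _ _ h2).
rewrite /= in h3. by rewrite [_ * s.2 + _]addrC.
Qed.

Lemma J_add r s : J r -> J s -> J (padd r s).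
Proof. case: Hc => _ [_ [_ [Ha _]]]; exact: Ha. Qed.

Lemma J_swp r : J r -> J (swp r).
Proof. case: Hc => _ [Hs _]; exact: Hs. Qed.

Lemma J_pw_le p n k : J (pw p n) -> (n <= k)%N -> J (pw p k).
Proof.
move=> Hj /subnK <-; rewrite addnC pwD; exact: J_tw.
Qed.

Lemma binom p q n m : J (pw p n) -> J (pw q m) -> J (pw (padd p q) (n + m)).
Proof.
move=> Hp Hq.
suff H : forall c a b, (n + m <= a + b + c)%N ->
  J (tw (tw (pw p a) (pw q b)) (pw (padd p q) c)).
  by move: (H (n + m)%N 0%N 0%N); rewrite /= !tw1; apply.
elim=> [|c IH] a b Hle.
- rewrite /= twC tw1.
  case: (leqP n a) => Ha.
  + apply: J_tw; exact: J_pw_le Hp Ha.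
  + have Hb : (m <= b)%N by move: Hle Ha; rewrite addn0; lia.
    by rewrite twC; apply: J_tw; exact: J_pw_le Hq Hb.
- have -> : tw (tw (pw p a) (pw q b)) (pw (padd p q) c.+1) =
     padd (tw (tw (pw p a.+1) (pw q b)) (pw (padd p q) c))
          (tw (tw (pw p a) (pw q b.+1)) (pw (padd p q) c)).
    rewrite pwS [tw (pw (padd p q) c) _]twC twA.
    rewrite [tw _ (padd p q)]twC twD -!twD.
    congr tw; rewrite /padd !pwS /=.
    apply: pair_eq; rewrite /tw /=; ring.
  apply: J_add; apply: IH; lia.
Qed.

End Aux.
Arguments J {A} rho r.
Arguments J_tw {A rho} Hc r s.
Arguments J_swp {A rho} Hc r.
Arguments binom {A rho} Hc {p q n m}.
Arguments pw {A} p k.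
Arguments swp {A} p.
Arguments padd {A} p q.
Arguments pw_swp {A} p k.
Arguments pwM {A} p q k.
Arguments pair_eq {A} p q.
Arguments twpow_pw {A} p n.

Theorem proposition2p10 (A : comNzSemiRingType) (rho : A -> A -> Prop) :
  is_congruence rho ->
  is_congruence (sqrt_rel rho) /\
  (forall a b : A, rel_plus (sqrt_rel rho) a b <-> sqrt_rel rho a b).
Proof.
move=> Hc.
have Hc' := Hc; case: Hc' => Hr [Hs [Ht [Ha Hm]]].
have E : forall a b, sqrt_rel rho a b <->
    exists c n, J rho (pw (a + c, b + c) n.+1).
  move=> a b; split.
  - case=> c [n [Hn H]]; exists c, n.-1; rewrite prednK //.
    by rewrite /J -twpow_pw.
  - case=> c [n H]; exists c, n.+1; split => //.
    by rewrite twpow_pw.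
split; last first.
  move=> a b; split.
  - case=> c /E [d [n H]]; apply/E; exists (c + d), n.
    by rewrite !addrA.
  - move=> /E [d [n H]]; exists 0; apply/E; exists d, n; by rewrite !addr0.
split.
  move=> a; apply/E; exists 0, 0%N; rewrite /J /= /tw /=; exact: Hr.
split.
  move=> a b /E [c [n H]]; apply/E; exists c, n.
  have -> : (b + c, a + c) = swp (a + c, b + c) by [].
  rewrite pw_swp; case: (odd _) => //; exact: J_swp.
split.
  move=> a b e /E [c [n H1]] /E [d [m H2]]; apply/E.
  exists (b + c + d), (n.+1 + m)%N.
  have := binom Hc H1 H2.
  have -> : padd (a + c, b + c) (b + d, e + d) = (a + (b + c + d), e + (b + c + d)).
    by apply: pair_eq; rewrite /padd /=; ring.
  by rewrite addnS.
split.
  move=> a b c d /E [x [n H1]] /E [y [m H2]]; apply/E.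
  exists (x + y), (n.+1 + m)%N.
  have := binom Hc H1 H2.
  have -> : padd (a + x, b + x) (c + y, d + y) = (a + c + (x + y), b + d + (x + y)).
    by apply: pair_eq; rewrite /padd /=; ring.
  by rewrite addnS.
move=> a b c d /E [x [n H1]] /E [y [m H2]]; apply/E.
exists (b * c + c * x + b * y), (n.+1 + m)%N.
have H1' : J rho (pw (tw (c, 0) (a + x, b + x)) n.+1).
  by rewrite pwM twC; apply: J_tw.
have H2' : J rho (pw (tw (b, 0) (c + y, d + y)) m.+1).
  by rewrite pwM twC; apply: J_tw.
have := binom Hc H1' H2'.
have -> : padd (tw (c, 0) (a + x, b + x)) (tw (b, 0) (c + y, d + y)) =
   (a * c + (b * c + c * x + b * y), b * d + (b * c + c * x + b * y)).
  by apply: pair_eq; rewrite /padd /tw /=; ring.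
by rewrite addnS.
Qed.
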